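(* For every $t>0$, the limit $\lim_{n\to\infty}\frac1n\log\mathbb{E}\big(e^{tH_n}\big)$ exists.
   Context: Standing setup (discrete-time Hawkes process, DTHP). Let $(a_i)_{i=0}^\infty$ be a sequence of strictly positive real numbers with $\sum_{i=0}^\infty a_i<1$ and $\sum_{i=1}^\infty i\,a_i<\infty$. The arrival process $\{\xi_n\}_{n\ge1}$ is a sequence of $\{0,1\}$-valued random variables on a probability space $(\Omega,\mathcal F,\mathbb P)$ with $\mathbb{P}(\xi_1=1)=a_0$, $\mathbb P(\xi_1=0)=1-a_0$, and for $n\ge2$, $$\mathbb{P}(\xi_n=1\mid \xi_1,\dots,\xi_{n-1})=a_0+\sum_{i=1}^{n-1}a_{n-i}\xi_i,\qquad \mathbb{P}(\xi_n=0\mid \xi_1,\dots,\xi_{n-1})=1-\Big(a_0+\sum_{i=1}^{n-1}a_{n-i}\xi_i\Big).$$ The DTHP is $H_n=\sum_{i=1}^n\xi_i$, and $\mathcal F_n=\sigma(\xi_1,\dots,\xi_n)$. *)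

(* Defs.v *)
From HB Require Import structures.
From mathcomp Require Import all_boot all_order all_algebra.
From mathcomp Require Import all_classical all_reals all_analysis.
Set Implicit Arguments. Unset Strict Implicit. Unset Printing Implicit Defensive.
Import Order.TTheory GRing.Theory Num.Theory numFieldNormedType.Exports.
Local Open Scope ring_scope.

(* Discrete-time Hawkes process with kernel (a_i)_{i>=0}.
   A sample path of (xi_1, ..., xi_n) is encoded as x : n.-tuple bool,
   with tnth x k = xi_{k+1} (0-based index k). *)

(* Conditional intensity at time k+1 given the past:
   P(xi_{k+1} = 1 | xi_1..xi_k) = a_0 + sum_{i=1}^{k} a_{k+1-i} xi_i.
   In 0-based indices (time i+1 <-> index i, i < k): a (k - i). *)
Definition dthp_intensity (R : realType) (a : nat -> R) (n : nat)
    (x : n.-tuple bool) (k : 'I_n) : R :=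
  a 0%N + \sum_(i < n | (i < k)%N) a (k - i)%N * (tnth x i)%:R.

(* Joint law of (xi_1, ..., xi_n): P(xi_1 = x_1, ..., xi_n = x_n), the product
   of the successive conditional probabilities (chain rule). *)
Definition dthp_pathprob (R : realType) (a : nat -> R) (n : nat)
    (x : n.-tuple bool) : R :=
  \prod_(k < n) (if tnth x k then dthp_intensity a x k
                 else 1 - dthp_intensity a x k).

Definition dthp_H (R : realType) (n : nat) (x : n.-tuple bool) : R :=
  \sum_(i < n) (tnth x i)%:R.

Definition dthp_mgf (R : realType) (a : nat -> R) (n : nat) (t : R) : R :=
  \sum_(x : n.-tuple bool) dthp_pathprob a x * expR (t * dthp_H R x).

(* Main.v *)
Require Import Defs.
From HB Require Import structures.
From mathcomp Require Import all_boot all_order all_algebra.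
From mathcomp Require Import all_classical all_reals all_analysis.
From mathcomp Require Import ring lra.
Import Order.TTheory GRing.Theory Num.Theory numFieldNormedType.Exports.
Set Implicit Arguments. Unset Strict Implicit. Unset Printing Implicit Defensive.
Local Open Scope ring_scope.
Definition shiftb (R : realType) (a b : nat -> R) (c : bool) : nat -> R :=
  fun k => b k.+1 + a k.+1 * c%:R.

Fixpoint Gf (R : realType) (a : nat -> R) (t : R) (m : nat) (b : nat -> R) : R :=
  match m with
  | 0 => 1
  | m'.+1 => b 0%N * expR t * Gf a t m' (shiftb a b true)
             + (1 - b 0%N) * Gf a t m' (shiftb a b false)
  end.

Definition adm (R : realType) (a b : nat -> R) :=
  forall k, a 0%N <= b k /\ b k + \sum_(j < k) a j.+1 <= 1.

Lemma adm_shift (R : realType) (a b : nat -> R) c :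
  (forall i, 0 <= a i) -> adm a b -> adm a (shiftb a b c).
Proof.
move=> ha hb k; rewrite /shiftb; have [h1 h2] := hb k.+1; split.
  apply: (le_trans h1); rewrite lerDl; apply: mulr_ge0 => //; exact: ler0n.
rewrite big_ord_recr /= in h2; apply: le_trans h2.
rewrite -addrA lerD2l addrC lerD2l; case: c; rewrite ?mulr1 ?mulr0 //.
Qed.

Lemma adm_b0 (R : realType) (a b : nat -> R) :
  (forall i, 0 <= a i) -> adm a b -> 0 <= b 0%N <= 1.
Proof.
move=> ha hb; have [h1 h2] := hb 0%N; rewrite big_ord0 addr0 in h2.
by rewrite h2 andbT; apply: le_trans h1.
Qed.

Lemma Gf_ge1 (R : realType) (a : nat -> R) t m :
  (forall i, 0 <= a i) -> 0 <= t -> forall b, adm a b -> 1 <= Gf a t m b.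
Proof.
move=> ha ht; elim: m => [|m IH] b hb //=.
have /andP[b0 b1] := adm_b0 ha hb.
have h1 := IH _ (adm_shift true ha hb); have h2 := IH _ (adm_shift false ha hb).
have e1 : 1 <= expR t by rewrite -expR0 ler_expR.
have : 1 <= expR t * Gf a t m (shiftb a b true).
  by rewrite -[1]mulr1; apply: ler_pM.
rewrite -mulrA.
move: (expR t * _) (Gf a t m (shiftb a b false)) h2 => X Y hY hX.
have : b 0%N * 1 + (1 - b 0%N) * 1 <= b 0%N * X + (1 - b 0%N) * Y.
  by apply: lerD; apply: ler_wpM2l; rewrite ?subr_ge0.
by rewrite !mulr1 addrC subrK.
Qed.

Lemma Gf_le (R : realType) (a : nat -> R) t m :
  (forall i, 0 <= a i) -> 0 <= t -> forall b, adm a b ->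
  Gf a t m b <= expR (t * m%:R).
Proof.
move=> ha ht; elim: m => [|m IH] b hb /=; first by rewrite mulr0 expR0.
have /andP[b0 b1] := adm_b0 ha hb.
have h1 := IH _ (adm_shift true ha hb); have h2 := IH _ (adm_shift false ha hb).
have e1 : 1 <= expR t by rewrite -expR0 ler_expR.
rewrite -addn1 natrD mulrDr mulr1 expRD.
set E := expR (t * m%:R).
have hE : 0 <= E by apply: expR_ge0.
apply: (@le_trans _ _ (b 0%N * (expR t * E) + (1 - b 0%N) * (expR t * E))).
  rewrite -mulrA; apply: lerD; apply: ler_wpM2l; rewrite ?subr_ge0 //.
    by apply: ler_wpM2l => //; apply: expR_ge0.
  by apply: (le_trans h2); rewrite -/E ler_peMl.
by rewrite -mulrDl addrC subrK mul1r mulrC.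
Qed.

Lemma Gf_mono (R : realType) (a : nat -> R) t m :
  (forall i, 0 <= a i) -> 0 <= t -> forall b c, adm a b -> adm a c ->
  (forall k, b k <= c k) -> Gf a t m b <= Gf a t m c.
Proof.
move=> ha ht; elim: m => [|m IH] b c hb hc hbc //=.
have /andP[b0 b1] := adm_b0 ha hb.
have /andP[c0 c1] := adm_b0 ha hc.
have e1 : 1 <= expR t by rewrite -expR0 ler_expR.
have shle : forall d u v, (forall k, u k <= v k) -> 
   forall k, shiftb a u d k <= shiftb a v d k.
  by move=> d u v huv k; rewrite /shiftb lerD2r.
have hX1 := IH _ _ (adm_shift true ha hb) (adm_shift true ha hc) (shle true _ _ hbc).
have hX2 := IH _ _ (adm_shift false ha hb) (adm_shift false ha hc) (shle false _ _ hbc).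
have hY : Gf a t m (shiftb a b false) <= Gf a t m (shiftb a b true).
  apply: IH; try exact: adm_shift.
  by move=> k; rewrite /shiftb lerD2l mulr0 mulr1.
have hY2 := Gf_ge1 m ha ht (adm_shift false ha hb).
rewrite -!mulrA.
move: (Gf a t m (shiftb a b true)) (Gf a t m (shiftb a b false))
      (Gf a t m (shiftb a c true)) (Gf a t m (shiftb a c false)) hX1 hX2 hY hY2
  => Y1 Y2 X1 X2 hX1 hX2 hY hY2.
have hEY : Y2 <= expR t * Y1.
  by apply: (le_trans hY); rewrite -{1}[Y1]mul1r; apply: ler_wpM2r => //; 
     apply: le_trans hY; apply: le_trans hY2.
apply: (@le_trans _ _ (c 0%N * (expR t * Y1) + (1 - c 0%N) * Y2)).
  have : Y2 + b 0%N * (expR t * Y1 - Y2) <= Y2 + c 0%N * (expR t * Y1 - Y2).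
    by rewrite lerD2l; apply: ler_wpM2r; rewrite ?subr_ge0.
  by congr (_ <= _); ring.
apply: lerD; apply: ler_wpM2l; rewrite ?subr_ge0 //.
by apply: ler_wpM2l => //; apply: expR_ge0.
Qed.

Lemma Gf_super (R : realType) (a : nat -> R) t n m :
  (forall i, 0 <= a i) -> 0 <= t -> adm a (fun _ => a 0%N) -> forall b, adm a b ->
  Gf a t n b * Gf a t m (fun _ => a 0%N) <= Gf a t (n + m) b.
Proof.
move=> ha ht h0; elim: n => [|n IH] b hb.
  rewrite add0n /= mul1r; apply: Gf_mono => // k; exact: (hb k).1.
rewrite addSn /=.
have /andP[b0 b1] := adm_b0 ha hb.
have hG := Gf_ge1 m ha ht h0.
rewrite mulrDl -!mulrA; apply: lerD; apply: ler_wpM2l; rewrite ?subr_ge0 //.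
  by apply: ler_wpM2l; [exact: expR_ge0| apply: IH; apply: adm_shift].
by apply: IH; apply: adm_shift.
Qed.
Local Open Scope classical_set_scope.

Lemma super_mul (R : realType) (f : nat -> R) :
  (forall n m, f n + f m <= f (n + m)) -> (forall n, 0 <= f n) ->
  forall q N, q%:R * f N <= f (q * N)%N.
Proof.
move=> hs h0; elim=> [|q IH] N; first by rewrite mul0r.
rewrite mulSn -nat1r mulrDl mul1r; apply: le_trans (hs _ _).
by rewrite lerD2l.
Qed.

Lemma fekete (R : realType) (f : nat -> R) (C : R) :
  (forall n m, f n + f m <= f (n + m)) -> (forall n, 0 <= f n) ->
  (forall n, f n <= C * n%:R) -> cvgn (fun n => n%:R^-1 * f n).
Proof.
move=> hs h0 hC.
have C0 : 0 <= C by have := hC 1%N; rewrite mulr1; apply: le_trans.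
pose S := [set (n.+1)%:R^-1 * f n.+1 | n in setT].
have hS : has_sup S.
  split; first by exists (1%:R^-1 * f 1%N); exists 0%N.
  exists C => _ [n _ <-]; rewrite ler_pdivrMl ?ltr0n // mulrC; exact: hC.
apply/cvg_ex; exists (sup S); apply/cvgrPdist_le => e e0.
have [_ [N0 _ <-] hN0] := sup_adherent (divr_gt0 e0 (ltr0n R 2)) hS.
set N := N0.+1 in hN0 *.
near=> n.
have n0 : (0 < n)%N by near: n; exact: nbhs_infty_gt.
have nge : 2 * N%:R * C / e <= n%:R :> R by near: n; exact: nbhs_infty_ger.
have hub : n%:R^-1 * f n <= sup S.
  by apply: sup_upper_bound => //; exists n.-1 => //; rewrite prednK.
rewrite ger0_norm ?subr_ge0 // lerBlDr -lerBlDl ler_pdivlMl ?ltr0n //.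
set q := (n %/ N)%N.
have hq : f (q * N)%N <= f n.
  rewrite [in X in _ <= f X](divn_eq n N) -/q; apply: le_trans (hs _ _).
  by rewrite lerDl.
have hqN : n%:R - N%:R <= (q * N)%:R :> R.
  rewrite lerBlDr -natrD ler_nat {1}(divn_eq n N) leq_add2l.
  by apply: ltnW; apply: ltn_pmod.
have hm := super_mul hs h0 q N.
set v := N%:R^-1 * f N in hN0.
have fNv : f N = N%:R * v by rewrite /v mulrA mulfV ?mulr1 ?mul1r // pnatr_eq0.
have v0 : 0 <= v by rewrite /v mulr_ge0 // invr_ge0.
have vC : v <= C by rewrite /v ler_pdivrMl ?ltr0n // mulrC.
have N0r : 0 < N%:R :> R by rewrite ltr0n.
have n0r : 0 < n%:R :> R by rewrite ltr0n.
rewrite fNv natrM in hm hqN.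
have ne : 2 * N%:R * C <= e * n%:R by rewrite -ler_pdivrMl // mulrC.
set nn := n%:R in nge ne n0r hqN hq *.
set NN := N%:R in hqN hm fNv ne N0r hN0 vC.
set qq := q%:R in hqN hm.
set L := sup S in hN0 hub *.
have h1 : (nn - NN) * v <= qq * NN * v by apply: ler_wpM2r.
have h2 : NN * v <= NN * C by apply: ler_wpM2l => //; apply: ltW.
have h3 : nn * (L - e / 2) <= nn * v by apply: ler_wpM2l; [apply: ltW| apply: ltW].
rewrite mulrA in hm.
have : nn * (L - e) <= f n; last by [].
apply: (le_trans _ hq); apply: (le_trans _ hm); apply: (le_trans _ h1).
rewrite mulrBl; apply: (@le_trans _ _ (nn * v - NN * C)); last by rewrite lerB.
apply: (@le_trans _ _ (nn * (L - e/2) - NN * C)); last by rewrite lerB.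
have : NN * C <= nn * (e / 2).
  nra.
lra.
Unshelve. all: end_near.
Qed.
Local Close Scope classical_set_scope.

Definition intb (R : realType) (a b : nat -> R) (n : nat)
    (x : n.-tuple bool) (k : 'I_n) : R :=
  b k + \sum_(i < n | (i < k)%N) a (k - i)%N * (tnth x i)%:R.

Definition pathb (R : realType) (a b : nat -> R) (n : nat) (x : n.-tuple bool) : R :=
  \prod_(k < n) (if tnth x k then intb a b x k else 1 - intb a b x k).

Definition mgfb (R : realType) (a : nat -> R) (t : R) (b : nat -> R) (n : nat) : R :=
  \sum_(x : n.-tuple bool) pathb a b x * expR (t * dthp_H R x).

Lemma mgf_mgfb (R : realType) (a : nat -> R) n t :
  dthp_mgf a n t = mgfb a t (fun _ => a 0%N) n.
Proof. by []. Qed.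


Lemma sum_tuple_cons (R : realType) n (F : n.+1.-tuple bool -> R) :
  \sum_(x : n.+1.-tuple bool) F x =
  \sum_(xs : n.-tuple bool) F [tuple of true :: xs] +
  \sum_(xs : n.-tuple bool) F [tuple of false :: xs].
Proof.
rewrite (reindex (fun p : bool * n.-tuple bool => [tuple of p.1 :: p.2])) /=.
  by rewrite -(pair_bigA _ (fun (c : bool) (xs : n.-tuple bool) => F [tuple of c :: xs])) big_bool.
exists (fun x => (thead x, [tuple of behead x])) => [[c xs]|x] _ /=.
  by rewrite theadE; congr pair; apply: val_inj.
by apply: val_inj; rewrite [in RHS](tuple_eta x).
Qed.

Lemma intb0 (R : realType) (a b : nat -> R) n c (xs : n.-tuple bool) :
  intb a b [tuple of c :: xs] ord0 = b 0%N.
Proof. by rewrite /intb big_pred0 ?addr0 // => i; rewrite ltn0. Qed.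

Lemma intbS (R : realType) (a b : nat -> R) n c (xs : n.-tuple bool) (k : 'I_n) :
  intb a b [tuple of c :: xs] (lift ord0 k) = intb a (shiftb a b c) xs k.
Proof.
rewrite /intb /shiftb lift0 big_mkcond big_ord_recl /= tnth0 subn0 -addrA.
congr (_ + (_ + _)); rewrite [RHS]big_mkcond; apply: eq_bigr => i _.
by rewrite ltnS tnthS subSS.
Qed.

Lemma mgfb_rec (R : realType) (a : nat -> R) t b n :
  mgfb a t b n.+1 = b 0%N * expR t * mgfb a t (shiftb a b true) n
                    + (1 - b 0%N) * mgfb a t (shiftb a b false) n.
Proof.
rewrite /mgfb sum_tuple_cons !mulr_sumr; congr (_ + _); apply: eq_bigr => xs _;
  rewrite /pathb /dthp_H !big_ord_recl !tnth0 intb0 /=;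
  under eq_bigr do rewrite tnthS intbS;
  under [X in expR (t * (_ + X))]eq_bigr do rewrite tnthS.
  by rewrite mulrDr mulr1 expRD; ring.
by rewrite add0r mulrA.
Qed.

Lemma mgfb_Gf (R : realType) (a : nat -> R) t n :
  forall b, mgfb a t b n = Gf a t n b.
Proof.
elim: n => [|n IH] b.
  rewrite /mgfb (big_pred1 [tuple]) => [|x]; last by apply/esym/eqP; rewrite [x]tuple0.
  by rewrite /pathb /dthp_H !big_ord0 mulr0 expR0 mulr1.
by rewrite mgfb_rec /= !IH.
Qed.

Unset Implicit Arguments.

Theorem lemma4p7 (R : realType) (a : nat -> R)
    (ha_pos : forall i, 0 < a i)
    (ha_cvg : cvgn (series a))
    (ha_lt1 : limn (series a) < 1)
    (ha_mean : cvgn (series (fun i => i%:R * a i)))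
    (t : R) (ht : 0 < t) :
  cvgn (fun n : nat => n%:R^-1 * ln (dthp_mgf a n t)).
Proof.
have ha : forall i, 0 <= a i by move=> i; apply: ltW.
have ht0 : 0 <= t by apply: ltW.
have h0 : adm a (fun _ => a 0%N).
  move=> k; split => //.
  have -> : a 0%N + \sum_(j < k) a j.+1 = series a k.+1.
    by rewrite /series /= big_mkord big_ord_recl.
  apply/ltW/(le_lt_trans _ ha_lt1); apply: nondecreasing_cvgn_le => //.
  by apply: nondecreasing_series => n _ _; apply: ha.
pose f n := ln (Gf a t n (fun _ => a 0%N)).
have Gpos : forall n, 0 < Gf a t n (fun _ => a 0%N).
  by move=> n; apply: (lt_le_trans ltr01); apply: Gf_ge1.
have -> : (fun n : nat => n%:R^-1 * ln (dthp_mgf a n t)) =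
          (fun n => n%:R^-1 * f n).
  by apply: funext => n; rewrite mgf_mgfb mgfb_Gf.
apply: (@fekete _ f t).
- move=> n m; rewrite /f -lnM ?posrE //; rewrite ler_ln ?posrE ?mulr_gt0 //.
  exact: Gf_super.
- by move=> n; apply: ln_ge0; apply: Gf_ge1.
- move=> n; rewrite /f -[t * _]expRK ler_ln ?posrE ?expR_gt0 //.
  exact: Gf_le.
Qed.
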